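(* Assume the standing assumptions in the context. For $(k,y)\in\mathbb{S}$ and $N\in\mathbb{N}$ let $V((k,y),N)$ be the number of visits of the walk to $(k,y)$ before time $N$. Then for each $K>0$ the family of random variables $V((k,y),N)/\sqrt{N}$, where the walk is started from $\xi(0)=z$, is uniformly integrable, uniformly over $N\in\mathbb{N}$, $z\in\mathbb{S}$, and $(k,y)\in\mathbb{S}$ with $|k|\le K\sqrt{N}$.
   Context: Fix $m\ge1$, $\mathbb{S}=\mathbb{Z}\times\{1,\dots,m\}$. Environment $(P_n,Q_n,R_n)_{n\in\mathbb{Z}}$, nonnegative $m\times m$ with $(P_n+Q_n+R_n)\mathbf{1}=\mathbf{1}$; the walk $\xi$ jumps from $(n,i)$ to $(n+1,j),(n,j),(n-1,j)$ with probabilities $P_n(i,j),R_n(i,j),Q_n(i,j)$. Norm $\|x\|=\max|x_i|$. Standing assumptions: ellipticity ($\bar\varepsilon>0$, $k_0$ with $\|R_n^{k_0}\|\le1-\bar\varepsilon$, $((I-R_n)^{-1}P_n)(i,j)\ge\bar\varepsilon$, $((I-R_n)^{-1}Q_n)(i,j)\ge\bar\varepsilon$); bounded potential ($\zeta_n=\lim_{a\to-\infty}\psi_{n,a}$, $\psi_{a,a}$ any stochastic, $\psi_{n,a}=(I-R_n-Q_n\psi_{n-1,a})^{-1}P_n$, $A_n=(I-R_n-Q_n\zeta_{n-1})^{-1}Q_n$, $|\log\|A_n\cdots A_1\||\le C_P$ for $n\ge1$, $|\log\|A_0\cdots A_{n+1}\||\le C_P$ for $n\le-1$); column vectors $\mathfrak{m}_n$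 with $\mathfrak{m}_n=P_n\mathfrak{m}_{n+1}+R_n\mathfrak{m}_n+Q_n\mathfrak{m}_{n-1}$, $|\mathfrak{m}_{n'}(i')-\mathfrak{m}_{n''}(i'')|\le K'$ for $|n'-n''|\le1$, $\sum_j\mathfrak{m}_n(j)/n\to m$ as $|n|\to\infty$; with $\zeta^-_n$ the unique stochastic sequence with $\zeta^-_n=(I-R_n-P_n\zeta^-_{n+1})^{-1}Q_n$ and $\alpha_n=Q_{n+1}(I-R_n-Q_n\zeta_{n-1})^{-1}$, positive bounded row vectors $\rho_n$ with $\rho_n=\rho_{n-1}P_{n-1}+\rho_nR_n+\rho_{n+1}Q_{n+1}$, $\rho_n=\rho_{n+1}\alpha_n$, $\rho_nP_n(\mathfrak{m}_{n+1}-\zeta^-_{n+1}\mathfrak{m}_n)=\frac1{2m}$; and a constant $a$ with $\lim_{N\to\pm\infty}\frac1{|N|}\sum_{n=0}^{N-1}\rho_n\mathbf{1}=a$. *)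

(* Defs.v *)
From HB Require Import structures.
From mathcomp Require Import all_boot all_order all_algebra.
From mathcomp Require Import reals exp.
Set Implicit Arguments. Unset Strict Implicit. Unset Printing Implicit Defensive.
Import Order.TTheory GRing.Theory Num.Theory.
Local Open Scope ring_scope.

Definition stochastic (R : realType) (m : nat) (A : 'M[R]_m) : Prop :=
  (forall i j, 0 <= A i j) /\ (forall i, \sum_(j < m) A i j = 1).

(* operator norm induced by ||x|| = max_i |x_i|: maximal absolute row sum *)
Definition mxnorm (R : realType) (p q : nat) (A : 'M[R]_(p, q)) : R :=
  \big[Num.max/0]_(i < p) \sum_(j < q) `|A i j|.

Definition mxpow (R : realType) (m : nat) (A : 'M[R]_m) (k : nat) : 'M[R]_m :=
  iter k (mulmx A) 1%:M.

Fixpoint mprodl (R : realType) (m : nat) (f : nat -> 'M[R]_m) (k : nat) : 'M[R]_m :=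
  match k with 0 => 1%:M | k'.+1 => mprodl f k' *m f k' end.

Fixpoint mprodr (R : realType) (m : nat) (f : nat -> 'M[R]_m) (k : nat) : 'M[R]_m :=
  match k with 0 => 1%:M | k'.+1 => f k' *m mprodr f k' end.

(* psi_{a+k,a}, with psi_{a,a} = init a and
   psi_{n,a} = (I - R_n - Q_n psi_{n-1,a})^{-1} P_n for n > a *)
Fixpoint psiF (R : realType) (m : nat) (Pm Qm Rm : int -> 'M[R]_m)
    (init : int -> 'M[R]_m) (a : int) (k : nat) : 'M[R]_m :=
  match k with
  | 0 => init a
  | k'.+1 =>
      let n := (a + (k'.+1)%:Z)%R in
      invmx (1%:M - Rm n - Qm n *m psiF Pm Qm Rm init a k') *m Pm n
  end.

Definition Amx (R : realType) (m : nat) (Qm Rm : int -> 'M[R]_m)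
    (zeta : int -> 'M[R]_m) (n : int) : 'M[R]_m :=
  invmx (1%:M - Rm n - Qm n *m zeta (n - 1)) *m Qm n.

Definition alphamx (R : realType) (m : nat) (Qm Rm : int -> 'M[R]_m)
    (zeta : int -> 'M[R]_m) (n : int) : 'M[R]_m :=
  Qm (n + 1) *m invmx (1%:M - Rm n - Qm n *m zeta (n - 1)).

(* sum_{n=0}^{N-1} rho_n 1, read as sum_{n=N}^{-1} when N < 0 *)
Definition rho_sum (R : realType) (m : nat) (rho : int -> 'rV[R]_m) (N : int) : R :=
  if (0 <= N)%R then \sum_(0 <= j < `|N|%N) \sum_(i < m) rho (j%:Z) 0 i
  else \sum_(1 <= j < `|N|%N.+1) \sum_(i < m) rho (- (j%:Z)) 0 i.

Definition standing_assumptions (R : realType) (m : nat)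
    (Pm Qm Rm : int -> 'M[R]_m) (zeta zetam : int -> 'M[R]_m)
    (mf : int -> 'cV[R]_m) (rho : int -> 'rV[R]_m) (a : R) : Prop :=
  (forall n i j, 0 <= Pm n i j /\ 0 <= Qm n i j /\ 0 <= Rm n i j) /\
  (forall n i, \sum_(j < m) (Pm n i j + Qm n i j + Rm n i j) = 1) /\
  (exists (eps : R) (k0 : nat), 0 < eps /\
     forall n, mxnorm (mxpow (Rm n) k0) <= 1 - eps /\
       (forall i j, eps <= (invmx (1%:M - Rm n) *m Pm n) i j) /\
       (forall i j, eps <= (invmx (1%:M - Rm n) *m Qm n) i j)) /\
  (* zeta_n = lim_{a -> -oo} psi_{n,a}, for any stochastic choice of psi_{a,a} *)
  (forall init : int -> 'M[R]_m, (forall b, stochastic (init b)) ->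
     forall n (e : R), 0 < e -> exists a0 : int, forall b : int,
       (b <= a0)%R -> (b <= n)%R ->
       mxnorm (psiF Pm Qm Rm init b `|n - b|%N - zeta n) <= e) /\
  (exists CP : R,
     (forall k : nat, (0 < k)%N ->
        `| ln (mxnorm (mprodr (fun j => Amx Qm Rm zeta (j.+1)%:Z) k)) | <= CP) /\
     (forall k : nat, (0 < k)%N ->
        `| ln (mxnorm (mprodl (fun j => Amx Qm Rm zeta (- (j%:Z))) k)) | <= CP)) /\
  (forall n, mf n = Pm n *m mf (n + 1) + Rm n *m mf n + Qm n *m mf (n - 1)) /\
  (exists K' : R, forall (n1 n2 : int) (i1 i2 : 'I_m), (`|n1 - n2| <= 1)%R ->
     `|mf n1 i1 0 - mf n2 i2 0| <= K') /\
  (forall e : R, 0 < e -> exists L : nat, forall n : int, (L < `|n|)%N ->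
     `|(\sum_(j < m) mf n j 0) / n%:~R - m%:R| <= e) /\
  (forall n, stochastic (zetam n)) /\
  (forall n, zetam n = invmx (1%:M - Rm n - Pm n *m zetam (n + 1)) *m Qm n) /\
  (forall z : int -> 'M[R]_m, (forall n, stochastic (z n)) ->
     (forall n, z n = invmx (1%:M - Rm n - Pm n *m z (n + 1)) *m Qm n) ->
     forall n, z n = zetam n) /\
  (forall n i, 0 < rho n 0 i) /\
  (exists B : R, forall n i, rho n 0 i <= B) /\
  (forall n, rho n = rho (n - 1) *m Pm (n - 1) + rho n *m Rm n + rho (n + 1) *m Qm (n + 1)) /\
  (forall n, rho n = rho (n + 1) *m alphamx Qm Rm zeta n) /\
  (forall n, (rho n *m Pm n *m (mf (n + 1) - zetam (n + 1) *m mf n)) 0 0 = (2 * m%:R)^-1) /\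
  (forall e : R, 0 < e -> exists L : nat, forall N : int, (L < `|N|)%N ->
     `|rho_sum rho N / (`|N|%N)%:R - a| <= e).

(* a step: direction d.1 in {0,1,2} meaning level change -1, 0, +1, and new
   strip coordinate d.2 *)
Definition step (m : nat) : finType := ('I_3 * 'I_m)%type.

Definition move (m : nat) (x : int * 'I_m) (d : step m) : int * 'I_m :=
  ((x.1 + (nat_of_ord d.1)%:Z - 1)%R, d.2).

Definition stepw (R : realType) (m : nat) (Pm Qm Rm : int -> 'M[R]_m)
    (x : int * 'I_m) (d : step m) : R :=
  match nat_of_ord d.1 with
  | 0 => Qm x.1 x.2 d.2
  | 1 => Rm x.1 x.2 d.2
  | _ => Pm x.1 x.2 d.2
  end.

Fixpoint pathw (R : realType) (m : nat) (Pm Qm Rm : int -> 'M[R]_m)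
    (x : int * 'I_m) (s : seq (step m)) : R :=
  match s with
  | [::] => 1
  | d :: s' => stepw Pm Qm Rm x d * pathw Pm Qm Rm (move x d) s'
  end.

Fixpoint traj (m : nat) (x : int * 'I_m) (s : seq (step m)) : seq (int * 'I_m) :=
  x :: match s with [::] => [::] | d :: s' => traj (move x d) s' end.

Definition visits (m : nat) (v z : int * 'I_m) (N : nat) (s : seq (step m)) : nat :=
  count (pred1 v) (take N (traj z s)).

(* E_z[ X 1_{X > M} ] with X = V(v,N)/sqrt N, computed over the first N steps *)
Definition ui_tail (R : realType) (m : nat) (Pm Qm Rm : int -> 'M[R]_m)
    (z v : int * 'I_m) (N : nat) (M : R) : R :=
  \sum_(s : N.-tuple (step m))
     pathw Pm Qm Rm z s *
     (let X := (visits v z N s)%:R / Num.sqrt (N%:R) in if M < X then X else 0).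

(* Main.v *)
Require Import Defs.
From HB Require Import structures.
From mathcomp Require Import all_boot all_order all_algebra.
From mathcomp Require Import reals exp.
From mathcomp Require Import ring lra zify.
Import Order.TTheory GRing.Theory Num.Theory.
Local Open Scope ring_scope.

Section Mx.
Variable R : realType.
Variable m : nat.

Definition rowbound {p} (A : 'M[R]_(p, m)) (c : R) := forall i, \sum_j `|A i j| <= c.
Definition nonneg (A : 'M[R]_m) := forall i j, 0 <= A i j.

Lemma mxnorm_row (A : 'M[R]_m) c : mxnorm A <= c -> rowbound A c.
Proof.
move=> h i; apply: le_trans h; rewrite /mxnorm.
rewrite [X in _ <= X](bigD1 i) //=. by rewrite le_max lexx.
Qed.

Lemma rowsum_mul p (A : 'M[R]_(p, m)) (B : 'M[R]_m) i :
  \sum_j `|(A *m B) i j| <= \sum_l `|A i l| * (\sum_j `|B l j|).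
Proof.
apply: (@le_trans _ _ (\sum_j \sum_l `|A i l| * `|B l j|)).
  apply: ler_sum => j _; rewrite mxE; apply: (le_trans (ler_norm_sum _ _ _)).
  by apply: ler_sum => l _; rewrite normrM.
by rewrite exchange_big /=; apply: ler_sum => l _; rewrite mulr_sumr.
Qed.

Lemma rowbound_mul p (A : 'M[R]_(p, m)) (B : 'M[R]_m) a b :
  rowbound A a -> rowbound B b -> 0 <= b -> rowbound (A *m B) (a * b).
Proof.
move=> hA hB b0 i; apply: (le_trans (rowsum_mul _ A B i)).
apply: (@le_trans _ _ (\sum_l `|A i l| * b)).
  by apply: ler_sum => l _; apply: ler_wpM2l => //.
by rewrite -mulr_suml; apply: ler_wpM2r => //.
Qed.

Lemma mxpowS (A : 'M[R]_m) k : mxpow A k.+1 = A *m mxpow A k.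
Proof. by []. Qed.

Lemma mxpowD (A : 'M[R]_m) a b : mxpow A (a + b) = mxpow A a *m mxpow A b.
Proof.
elim: a => [|a IH]; first by rewrite add0n mul1mx.
by rewrite addSn !mxpowS IH mulmxA.
Qed.

Lemma rowbound1 : rowbound (1%:M : 'M[R]_m) 1.
Proof.
move=> i; rewrite (bigD1 i) //= big1 ?addr0.
  by rewrite mxE eqxx /= normr1.
by move=> j /negPf hj; rewrite mxE eq_sym hj /= normr0.
Qed.

Lemma rowbound_pow (A : 'M[R]_m) k0 r q :
  rowbound (mxpow A k0) r -> 0 <= r -> rowbound (mxpow A (k0 * q)) (r ^+ q).
Proof.
move=> h r0; elim: q => [|q IH]; first by rewrite muln0 expr0; exact: rowbound1.
by rewrite mulnS mxpowD exprS; apply: rowbound_mul => //; apply: exprn_ge0.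
Qed.

Lemma nonneg_mul (A B : 'M[R]_m) : nonneg A -> nonneg B -> nonneg (A *m B).
Proof.
move=> hA hB i j; rewrite mxE; apply: sumr_ge0 => l _; exact: mulr_ge0.
Qed.

Lemma nonneg1 : nonneg (1%:M : 'M[R]_m).
Proof. by move=> i j; rewrite mxE ler0n. Qed.

Lemma nonneg_pow (A : 'M[R]_m) k : nonneg A -> nonneg (mxpow A k).
Proof.
move=> h; elim: k => [|k IH]; first exact: nonneg1.
by rewrite mxpowS; apply: nonneg_mul.
Qed.

Lemma unit_IA (A : 'M[R]_m) k0 eps : 0 < eps ->
  rowbound (mxpow A k0) (1 - eps) -> (1%:M - A) \in unitmx.
Proof.
move=> e0 hb; rewrite unitmxE unitfE; apply/negP => /det0P [v vn0 hv].
have vA : v *m A = v.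
  by move: hv; rewrite mulmxBr mulmx1 => /eqP; rewrite subr_eq0 => /eqP <-.
have vAk : forall k, v *m mxpow A k = v.
  by elim=> [|k IH]; rewrite ?mulmx1 // mxpowS mulmxA vA.
set s := \sum_i `|v 0 i|.
have s0 : 0 <= s by apply: sumr_ge0 => i _.
have hs : s <= s * (1 - eps).
  rewrite {1}/s -(vAk k0); apply: (le_trans (rowsum_mul _ _ _ _)).
  rewrite /s mulr_suml; apply: ler_sum => l _; apply: ler_wpM2l => //; exact: hb.
have s00 : s = 0 by nra.
apply: (negP vn0); apply/eqP/matrixP => i j; rewrite mxE ord1.
apply/normr0_eq0/eqP; rewrite eq_le normr_ge0 andbT -s00.
by rewrite /s (bigD1 j) //= lerDl; apply: sumr_ge0.
Qed.

Lemma series_lb (A B C : 'M[R]_m) eps T :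
  0 < eps -> (1%:M - A) \in unitmx -> nonneg A -> nonneg B -> nonneg C ->
  (forall i, \sum_j (B i j + C i j + A i j) = 1) ->
  (forall i j, eps <= (invmx (1%:M - A) *m B) i j) ->
  (forall i j, eps <= (invmx (1%:M - A) *m C) i j) ->
  rowbound (mxpow A T) (eps / 2) ->
  forall i j, eps / 2 <= \sum_(t < T) (mxpow A t *m B) i j.
Proof.
move=> e0 hU nA nB nC hS hX hY hT.
set X := invmx (1%:M - A) *m B.
set Y := invmx (1%:M - A) *m C.
have ones : (B + C) *m const_mx 1 = (1%:M - A) *m (const_mx 1 : 'cV[R]_m).
  apply/matrixP => i k; rewrite !mxE.
  have -> : \sum_j (B + C) i j * const_mx 1 j k = \sum_j (B i j + C i j).
    by apply: eq_bigr => j _; rewrite !mxE mulr1.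
  have -> : \sum_j (1%:M - A) i j * const_mx 1 j k = \sum_j ((i == j)%:R - A i j).
    by apply: eq_bigr => j _; rewrite !mxE mulr1.
  have e1 : \sum_j (i == j)%:R = 1 :> R.
    rewrite (bigD1 i) //= eqxx big1 ?addr0 // => j /negPf.
    by rewrite eq_sym => ->.
  rewrite sumrB e1.
  have := hS i; rewrite big_split /=; lra.
have XY : forall i, \sum_j X i j + \sum_j Y i j = 1.
  move=> i.
  have := congr1 (fun M : 'cV[R]_m => M i 0)
    (congr1 (mulmx (invmx (1%:M - A))) ones).
  rewrite mulKmx // mulmxA mulmxDr !mxE => <-.
  rewrite -big_split /=; apply: eq_bigr => j _; rewrite !mxE mulr1 //.
have X1 : forall i j, X i j <= 1.
  move=> i j; rewrite -(XY i).
  apply: (@le_trans _ _ (\sum_j X i j)).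
    rewrite (bigD1 j) //= lerDl; apply: sumr_ge0 => l _.
    by apply: le_trans (hX _ _); apply: ltW.
  rewrite lerDl; apply: sumr_ge0 => l _.
  by apply: le_trans (hY _ _); apply: ltW.
have eX : X = B + A *m X.
  have : (1%:M - A) *m X = B by rewrite /X mulmxA mulmxV // mul1mx.
  by rewrite mulmxBl mul1mx => <-; rewrite subrK.
have dec : forall T, X = \sum_(t < T) (mxpow A t *m B) + mxpow A T *m X.
  elim=> [|T' IH]; first by rewrite big_ord0 add0r mul1mx.
  transitivity (B + A *m (\sum_(t < T') (mxpow A t *m B) + mxpow A T' *m X)).
    by rewrite -IH.
  rewrite mulmxDr mulmx_sumr big_ord_recl /= mul1mx addrA.
  congr (_ + _ + _).
    by apply: eq_bigr => t _; rewrite mulmxA.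
  by rewrite mulmxA.
move=> i j.
have hx : X i j = \sum_(t < T) (mxpow A t *m B) i j + (mxpow A T *m X) i j.
  by rewrite {1}(dec T) [LHS]mxE summxE.
have hr : (mxpow A T *m X) i j <= eps / 2.
  apply: (le_trans (ler_norm _)).
  rewrite mxE; apply: (le_trans (ler_norm_sum _ _ _)).
  apply: le_trans (hT i); apply: ler_sum => l _; rewrite normrM.
  rewrite -[X in _ <= X]mulr1; apply: ler_wpM2l => //.
  rewrite ger0_norm ?X1 //; by apply: le_trans (hX _ _); apply: ltW.
have := hX i j; rewrite -/X hx; lra.
Qed.

Lemma pow_small (r c : R) : 0 <= r -> r < 1 -> 0 < c -> exists q : nat, r ^+ q <= c.
Proof.
move=> r0 r1 c0; set d := 1 - r.
have d0 : 0 < d by rewrite /d subr_gt0.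
have key : forall q : nat, r ^+ q * (1 + q%:R * d) <= 1.
  elim=> [|q IH]; first by rewrite expr0 mul0r addr0 mul1r.
  have rq : 0 <= r ^+ q by apply: exprn_ge0.
  rewrite exprS -[q.+1]addn1 natrD.
  have : r * (1 + (q%:R + 1) * d) <= 1 + q%:R * d.
    have qn : 0 <= q%:R :> R by exact: ler0n.
    have er : r = 1 - d by rewrite /d; ring.
    have hdd : 0 <= (q%:R + 1) * d * d by apply: mulr_ge0; [apply: mulr_ge0|]; lra.
    rewrite er; nra.
  move=> h; apply: le_trans IH.
  rewrite mulrAC [X in _ <= X]mulrC; by apply: ler_wpM2r.
have cd0 : 0 < c * d by apply: mulr_gt0.
have hb : (c * d)^-1 < (Num.Def.archi_bound (c * d)^-1)%:R.
  by apply: archi_boundP; rewrite invr_ge0; apply: ltW.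
exists (Num.Def.archi_bound (c * d)^-1).
set q := Num.Def.archi_bound (c * d)^-1 in hb *.
have hq : 1 < q%:R * (c * d).
  by rewrite -ltr_pdivrMr // div1r.
have rq : 0 <= r ^+ q by apply: exprn_ge0.
have := key q; nra.
Qed.

End Mx.
Arguments nonneg {R m}.
Arguments rowbound {R m p}.
Arguments nonneg_mul {R m A B}.
Arguments nonneg_pow {R m A}.

Section Walk.
Variable R : realType.
Variable m : nat.
Variables Pm Qm Rm : int -> 'M[R]_m.
Hypothesis Hnn : forall n i j, 0 <= Pm n i j /\ 0 <= Qm n i j /\ 0 <= Rm n i j.
Hypothesis Hsum : forall n i, \sum_(j < m) (Pm n i j + Qm n i j + Rm n i j) = 1.

Local Notation S := (int * 'I_m)%type.
Definition Pop (f : S -> R) (x : S) : R :=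
  \sum_(d : step m) stepw Pm Qm Rm x d * f (move x d).
Definition Pt n f := iter n Pop f.

Lemma stepw_ge0 x d : 0 <= stepw Pm Qm Rm x d.
Proof.
rewrite /stepw; case: (nat_of_ord d.1) => [|[|k]];
  by case: (Hnn x.1 x.2 d.2) => [? [? ?]].
Qed.

Lemma Pop_split f x : Pop f x =
  \sum_j Qm x.1 x.2 j * f (x.1 - 1, j) + \sum_j Rm x.1 x.2 j * f (x.1, j)
  + \sum_j Pm x.1 x.2 j * f (x.1 + 1, j).
Proof.
rewrite /Pop.
transitivity (\sum_(i < 3) \sum_(j < m) stepw Pm Qm Rm x (i, j) * f (move x (i, j))).
  by rewrite pair_bigA; apply: eq_bigr => -[i j].
rewrite !big_ord_recl big_ord0 addr0 addrA /move /stepw /=.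
have e0 : x.1 + 0%:Z - 1 = x.1 - 1 by rewrite addr0.
have e1 : x.1 + 1%:Z - 1 = x.1 by rewrite addrK.
have e2 : x.1 + 2%:Z - 1 = x.1 + 1 by rewrite -addrA; congr (_ + _).
by rewrite e0 e1 e2.
Qed.

Lemma Pop_ext f g x : (forall y, f y = g y) -> Pop f x = Pop g x.
Proof. by move=> H; apply: eq_bigr => d _; rewrite H. Qed.

Lemma Pop_le f g x : (forall y, f y <= g y) -> Pop f x <= Pop g x.
Proof. by move=> H; apply: ler_sum => d _; apply: ler_wpM2l; [exact: stepw_ge0|]. Qed.

Lemma Pop_ge0 f x : (forall y, 0 <= f y) -> 0 <= Pop f x.
Proof. by move=> H; apply: sumr_ge0 => d _; apply: mulr_ge0; [exact: stepw_ge0|]. Qed.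

Lemma stepw_sum x : \sum_d stepw Pm Qm Rm x d = 1.
Proof.
have H := Pop_split (fun _ => 1) x.
have -> : \sum_d stepw Pm Qm Rm x d = Pop (fun _ => 1) x.
  by rewrite /Pop; apply: eq_bigr => d _; rewrite mulr1.
rewrite H -!big_split /=.
under eq_bigr do rewrite !mulr1.
rewrite -(Hsum x.1 x.2); apply: eq_bigr => j _; ring.
Qed.

Lemma Pop_const c x : Pop (fun _ => c) x = c.
Proof. by rewrite /Pop -mulr_suml stepw_sum mul1r. Qed.

Lemma Pop_lin a b f g x :
  Pop (fun y => a * f y + b * g y) x = a * Pop f x + b * Pop g x.
Proof.
rewrite /Pop !mulr_sumr -big_split /=; apply: eq_bigr => d _; ring.
Qed.

Lemma Pop_sum (I : finType) (F : I -> S -> R) x :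
  Pop (fun y => \sum_i F i y) x = \sum_i Pop (F i) x.
Proof.
rewrite /Pop exchange_big /=; apply: eq_bigr => d _; by rewrite mulr_sumr.
Qed.

Lemma PtS n f x : Pt n.+1 f x = Pop (Pt n f) x.
Proof. by rewrite /Pt iterS. Qed.

Lemma PtD a b f x : Pt (a + b) f x = Pt a (Pt b f) x.
Proof. by rewrite /Pt iterD. Qed.

Lemma Pt_ext n f g x : (forall y, f y = g y) -> Pt n f x = Pt n g x.
Proof.
elim: n x => [|n IH] x H; first exact: H.
by rewrite !PtS; apply: Pop_ext => y; apply: IH.
Qed.

Lemma Pt_le n f g x : (forall y, f y <= g y) -> Pt n f x <= Pt n g x.
Proof.
elim: n x => [|n IH] x H; first exact: H.
by rewrite !PtS; apply: Pop_le => y; apply: IH.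
Qed.

Lemma Pt_ge0 n f x : (forall y, 0 <= f y) -> 0 <= Pt n f x.
Proof.
elim: n x => [|n IH] x H; first exact: H.
by rewrite !PtS; apply: Pop_ge0 => y; apply: IH.
Qed.

Lemma Pt_const n c x : Pt n (fun _ => c) x = c.
Proof.
elim: n x => [|n IH] x //.
by rewrite PtS (Pop_ext _ (fun _ => c)) ?Pop_const.
Qed.

Lemma Pt_lin n a b f g x :
  Pt n (fun y => a * f y + b * g y) x = a * Pt n f x + b * Pt n g x.
Proof.
elim: n x => [|n IH] x //.
by rewrite !PtS (Pop_ext _ (fun y => a * Pt n f y + b * Pt n g y)) ?Pop_lin.
Qed.

Lemma Pt_sum n (I : finType) (F : I -> S -> R) x :
  Pt n (fun y => \sum_i F i y) x = \sum_i Pt n (F i) x.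
Proof.
elim: n x => [|n IH] x //.
by rewrite !PtS (Pop_ext _ (fun y => \sum_i Pt n (F i) y)) ?Pop_sum.
Qed.

Lemma Pt_affine n a c f x :
  Pt n (fun y => a * f y + c) x = a * Pt n f x + c.
Proof.
rewrite (Pt_ext _ _ (fun y => a * f y + c * 1)); last by move=> y; rewrite mulr1.
by rewrite (Pt_lin n a c f (fun _ => 1)) Pt_const mulr1.
Qed.

Lemma Pt_sub n f g x :
  Pt n (fun y => f y - g y) x = Pt n f x - Pt n g x.
Proof.
rewrite (Pt_ext _ _ (fun y => 1 * f y + (-1) * g y)); last by move=> y; ring.
by rewrite Pt_lin; ring.
Qed.

Lemma Pop_affine2 a b c f g x :
  Pop (fun y => a * f y + b * g y + c) x = a * Pop f x + b * Pop g x + c.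
Proof.
rewrite /Pop.
transitivity (\sum_d (a * (stepw Pm Qm Rm x d * f (move x d))
   + b * (stepw Pm Qm Rm x d * g (move x d)) + c * stepw Pm Qm Rm x d)).
  by apply: eq_bigr => d _; ring.
by rewrite !big_split /= -!mulr_sumr stepw_sum mulr1.
Qed.

Lemma PtSr n f x : Pt n.+1 f x = Pt n (Pop f) x.
Proof. by rewrite -addn1 PtD. Qed.

Lemma sum_ge_term (I : finType) (F : I -> R) i0 :
  (forall i, 0 <= F i) -> F i0 <= \sum_i F i.
Proof.
move=> H; rewrite (bigD1 i0) //= lerDl; apply: sumr_ge0 => i _; exact: H.
Qed.

Variable mf : int -> 'cV[R]_m.
Hypothesis Hmf : forall n, mf n = Pm n *m mf (n + 1) + Rm n *m mf n + Qm n *m mf (n - 1).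
Variable K' : R.
Hypothesis HK : forall (n1 n2 : int) (i1 i2 : 'I_m), (`|n1 - n2| <= 1)%R ->
     `|mf n1 i1 0 - mf n2 i2 0| <= K'.

Definition fm (x : S) : R := mf x.1 x.2 0.

Lemma K'_ge0 : (0 < m)%N -> 0 <= K'.
Proof.
move=> m0; have := HK 0 0 (Ordinal m0) (Ordinal m0).
by rewrite subrr normr0 subrr normr0; apply.
Qed.

Lemma Pop_fm x : Pop fm x = fm x.
Proof.
rewrite Pop_split /fm /=.
have := congr1 (fun M : 'cV[R]_m => M x.2 0) (Hmf x.1); rewrite !mxE /= => ->.
ring.
Qed.

Lemma Pop_bound phi x c :
  (forall j, phi (x.1 - 1, j) <= c) -> (forall j, phi (x.1, j) <= c) ->
  (forall j, phi (x.1 + 1, j) <= c) -> Pop phi x <= c.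
Proof.
move=> h1 h2 h3; rewrite Pop_split.
have e : c = \sum_j Qm x.1 x.2 j * c + \sum_j Rm x.1 x.2 j * c + \sum_j Pm x.1 x.2 j * c.
  rewrite -!mulr_suml -!mulrDl -!big_split /=.
  have -> : \sum_(i < m) (Qm x.1 x.2 i + Rm x.1 x.2 i + Pm x.1 x.2 i) = 1.
    by rewrite -(Hsum x.1 x.2); apply: eq_bigr => j _; ring.
  by rewrite mul1r.
rewrite [X in _ <= X]e; apply: lerD; first apply: lerD;
  apply: ler_sum => j _; apply: ler_wpM2l => //;
  by case: (Hnn x.1 x.2 j) => [? [? ?]].
Qed.

Lemma incr_sq x y : (`|y.1 - x.1| <= 1)%R -> (fm y - fm x) ^+ 2 <= K' ^+ 2.
Proof.
move=> h; have := HK y.1 x.1 y.2 x.2 h; rewrite -/(fm y) -/(fm x) => hb.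
have h0 : 0 <= K' by apply: le_trans hb.
rewrite -real_normK ?num_real //.
by apply: lerXn2r => //; rewrite nnegrE.
Qed.

Lemma Pop_var x : Pop (fun w => (fm w - fm x) ^+ 2) x <= K' ^+ 2.
Proof.
apply: Pop_bound => j; apply: incr_sq => /=.
- have -> : x.1 - 1 - x.1 = - 1 by ring.
  by rewrite normrN normr1.
- by rewrite subrr normr0.
- have -> : x.1 + 1 - x.1 = 1 by ring.
  by rewrite normr1.
Qed.

Lemma Pop_sq a y : Pop (fun w => (fm w - a) ^+ 2) y =
  (fm y - a) ^+ 2 + Pop (fun w => (fm w - fm y) ^+ 2) y.
Proof.
rewrite (Pop_ext _ (fun w => 1 * (fm w - fm y) ^+ 2 + (2 * (fm y - a)) * fm w
   + ((fm y - a) ^+ 2 - 2 * (fm y - a) * fm y))); last by move=> w; ring.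
rewrite Pop_affine2 Pop_fm; ring.
Qed.

Lemma Pt_var n a x : Pt n (fun w => (fm w - a) ^+ 2) x <= (fm x - a) ^+ 2 + n%:R * K' ^+ 2.
Proof.
elim: n => [|n IH]; first by rewrite mul0r addr0.
rewrite PtSr.
apply: (le_trans (Pt_le n _ (fun w => 1 * (fm w - a) ^+ 2 + K' ^+ 2) x _)).
  move=> y; rewrite Pop_sq mul1r; apply: lerD; [exact: lexx | exact: Pop_var].
rewrite Pt_affine mul1r -[n.+1]addn1 natrD mulrDl mul1r.
move: IH; lra.
Qed.

Lemma Pt_abs (m0 : (0 < m)%N) n x :
  Pt n (fun w => `|fm w - fm x|) x <= K' * Num.sqrt n%:R + 1.
Proof.
have hK := K'_ge0 m0.
set lam := K' * Num.sqrt n%:R + 1.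
have hsq : 0 <= Num.sqrt (n%:R : R) := sqrtr_ge0 _.
have lam0 : 0 < lam by rewrite /lam; apply: ltr_pwDr => //; apply: mulr_ge0.
set mu := (2 * lam)^-1.
have mu0 : 0 <= mu by rewrite /mu invr_ge0; apply: mulr_ge0 => //; apply: ltW.
have hmu : mu * (2 * lam) = 1 by rewrite /mu mulVf // mulf_neq0 // ?gt_eqF.
apply: (le_trans (Pt_le n _ (fun w => mu * (fm w - fm x) ^+ 2 + lam / 2) x _)).
  move=> y; set t := fm y - fm x.
  rewrite -real_normK ?num_real //.
  have ht : 0 <= `|t| := normr_ge0 t.
  have h2 : 0 <= (`|t| - lam) ^+ 2 * mu by apply: mulr_ge0 => //; apply: sqr_ge0.
  have e : (`|t| - lam) ^+ 2 * mu = mu * `|t| ^+ 2 + lam / 2 - `|t|.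
    have -> : lam / 2 = lam ^+ 2 * mu.
      by rewrite /mu; field; rewrite ?gt_eqF // ?mulf_neq0 ?gt_eqF.
    apply/eqP; rewrite -subr_eq0.
    have -> : (`|t| - lam) ^+ 2 * mu - (mu * `|t| ^+ 2 + lam ^+ 2 * mu - `|t|)
      = `|t| * (1 - mu * (2 * lam)) by ring.
    by rewrite hmu subrr mulr0.
  by rewrite -subr_ge0 -e.
rewrite Pt_affine.
have := Pt_var n (fm x) x; rewrite subrr expr0n /= add0r => hv.
have hn : n%:R * K' ^+ 2 <= lam ^+ 2.
  have hs : (n%:R : R) = Num.sqrt (n%:R : R) ^+ 2 by rewrite sqr_sqrtr ?ler0n.
  rewrite /lam {1}hs.
  have : 0 <= K' * Num.sqrt n%:R by apply: mulr_ge0.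
  set u := K' * Num.sqrt n%:R; move=> hu.
  have -> : Num.sqrt (n%:R : R) ^+ 2 * K' ^+ 2 = u ^+ 2 by rewrite /u exprMn mulrC.
  nra.
have : mu * Pt n (fun w => (fm w - fm x) ^+ 2) x <= mu * lam ^+ 2.
  by apply: ler_wpM2l => //; apply: le_trans hv hn.
have -> : mu * lam ^+ 2 = lam / 2.
  by rewrite /mu; field; rewrite ?gt_eqF // ?mulf_neq0 ?gt_eqF.
lra.
Qed.

Lemma Pop_jensen c y : `|fm y - c| <= Pop (fun w => `|fm w - c|) y.
Proof.
have -> : fm y - c = \sum_d stepw Pm Qm Rm y d * (fm (move y d) - c).
  rewrite -{1}(Pop_fm y) /Pop.
  under [X in _ = X]eq_bigr do rewrite mulrBr.
  by rewrite sumrB -mulr_suml stepw_sum mul1r.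
apply: (le_trans (ler_norm_sum _ _ _)); apply: ler_sum => d _.
by rewrite normrM ger0_norm // stepw_ge0.
Qed.

Lemma Pt_jensen c s y : `|fm y - c| <= Pt s (fun w => `|fm w - c|) y.
Proof.
elim: s y => [|s IH] y //.
rewrite PtS; apply: (le_trans (Pop_jensen c y)); apply: Pop_le => w; exact: IH.
Qed.

Lemma Pt_gap (m0 : (0 < m)%N) c n y :
  Pt n (fun w => `|fm w - c|) y - `|fm y - c| <= K' * Num.sqrt n%:R + 1.
Proof.
rewrite lerBlDr.
apply: (le_trans (Pt_le n _ (fun w => 1 * `|fm w - fm y| + `|fm y - c|) y _)).
  by move=> w; rewrite mul1r; apply: ler_distD.
by rewrite Pt_affine mul1r lerD2r; apply: Pt_abs.
Qed.

Lemma tanaka (m0 : (0 < m)%N) v H delta : 0 < delta ->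
  delta <= \sum_(s < H) Pt s (fun w => `|fm w - fm v|) v ->
  forall n z, \sum_(t < n) Pt t (fun y => (y == v)%:R) z <=
    (H%:R * H%:R * (K' * Num.sqrt n%:R + 1)) / delta.
Proof.
move=> d0 hd n z.
set g := fun w => `|fm w - fm v|.
set L := K' * Num.sqrt n%:R + 1.
have L0 : 0 <= L.
  by rewrite /L; apply: addr_ge0 => //; apply: mulr_ge0; [exact: K'_ge0|exact: sqrtr_ge0].
have hW : forall y, delta * (y == v)%:R + 0 <= \sum_(s < H) (Pt s g y - g y).
  move=> y; rewrite addr0; case: eqP => [->|_].
    rewrite mulr1 /g subrr normr0; under eq_bigr do rewrite subr0; exact: hd.
  rewrite mulr0; apply: sumr_ge0 => s _; rewrite subr_ge0; exact: Pt_jensen.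
have hL : forall s, \sum_(t < n) (Pt (t + s) g z - Pt t g z) <= s%:R * L.
  elim=> [|s IH].
    by rewrite big1 ?mul0r // => t _; rewrite addn0 subrr.
  have -> : \sum_(t < n) (Pt (t + s.+1) g z - Pt t g z) =
    \sum_(t < n) ((Pt (t + s) g z - Pt t g z) +
     (Pt (t.+1 + s) g z - Pt (t + s) g z)).
    apply: eq_bigr => t _; rewrite addnS -addSn; ring.
  rewrite big_split /=.
  have -> : \sum_(t < n) (Pt (t.+1 + s) g z - Pt (t + s) g z) =
      Pt (n + s) g z - Pt (0 + s) g z.
    by rewrite -(telescope_sumr (fun t => Pt (t + s) g z) (leq0n n)) big_mkord.
  have : Pt (n + s) g z - Pt s g z <= L.
    rewrite addnC PtD -Pt_sub.
    apply: (le_trans (Pt_le _ _ (fun _ => L) _ _)); last by rewrite Pt_const.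
    move=> y; exact: Pt_gap.
  rewrite add0n -[s.+1]addn1 natrD mulrDl mul1r.
  move: IH; lra.
have main : delta * \sum_(t < n) Pt t (fun y => (y == v)%:R) z <=
    \sum_(t < n) \sum_(s < H) (Pt (t + s) g z - Pt t g z).
  rewrite mulr_sumr; apply: ler_sum => t _.
  have := Pt_affine t delta 0 (fun y => (y == v)%:R) z; rewrite addr0 => <-.
  apply: (le_trans (Pt_le _ _ _ _ hW)).
  rewrite Pt_sum; apply: ler_sum => s _.
  by rewrite Pt_sub -PtD.
rewrite ler_pdivlMr // mulrC; apply: (le_trans main).
rewrite exchange_big /=.
apply: (@le_trans _ _ (\sum_(s < H) (s%:R * L))).
  by apply: ler_sum => s _; exact: hL.
apply: (@le_trans _ _ (\sum_(s < H) (H%:R * L))).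
  apply: ler_sum => s _; apply: ler_wpM2r => //.
  by rewrite ler_nat; apply: ltnW.
rewrite sumr_const card_ord -(mulr_natr (H%:R * L) H). by rewrite mulrAC.
Qed.

Lemma pathw_ge0 x s : 0 <= pathw Pm Qm Rm x s.
Proof.
elim: s x => [|d s IH] x /=; first exact: ler01.
by apply: mulr_ge0; [exact: stepw_ge0 | exact: IH].
Qed.

Lemma tuple_sum_cons n (F : (n.+1).-tuple (step m) -> R) :
  \sum_s F s = \sum_d \sum_(s : n.-tuple (step m)) F [tuple of d :: s].
Proof.
rewrite pair_bigA /=.
rewrite (reindex (fun p : step m * n.-tuple (step m) => [tuple of p.1 :: p.2])) //=.
exists (fun s => (thead s, [tuple of behead s])).
  move=> [d s] _ /=; rewrite theadE; congr (_, _); exact: val_inj.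
by move=> s _ /=; rewrite [RHS]tuple_eta.
Qed.

Definition Ex x n (F : seq (step m) -> R) : R :=
  \sum_(s : n.-tuple (step m)) pathw Pm Qm Rm x s * F (tval s).

Lemma Ex_cons x n F : Ex x n.+1 F =
  \sum_d stepw Pm Qm Rm x d * Ex (move x d) n (fun s => F (d :: s)).
Proof.
rewrite /Ex tuple_sum_cons; apply: eq_bigr => d _.
rewrite mulr_sumr; apply: eq_bigr => s _ /=; by rewrite mulrA.
Qed.

Lemma Ex0 x F : Ex x 0 F = F [::].
Proof.
rewrite /Ex (eq_bigr (fun _ => F [::])); last first.
  by move=> s _; rewrite tuple0 /= mul1r.
by rewrite sumr_const card_tuple expn0.
Qed.

Lemma Ex_ext x n F G : (forall s, F s = G s) -> Ex x n F = Ex x n G.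
Proof. by move=> H; apply: eq_bigr => s _; rewrite H. Qed.

Lemma Ex_one x n : Ex x n (fun _ => 1) = 1.
Proof.
elim: n x => [|n IH] x; first by rewrite Ex0.
rewrite Ex_cons (eq_bigr (fun d => stepw Pm Qm Rm x d)) ?stepw_sum //.
by move=> d _; rewrite IH mulr1.
Qed.

Lemma Ex_affine x n a b c F G :
  Ex x n (fun s => a * F s + b * G s + c) = a * Ex x n F + b * Ex x n G + c.
Proof.
rewrite /Ex.
transitivity (\sum_(s : n.-tuple (step m)) (a * (pathw Pm Qm Rm x s * F s)
   + b * (pathw Pm Qm Rm x s * G s) + c * (pathw Pm Qm Rm x s * 1))).
  by apply: eq_bigr => s _; ring.
by rewrite !big_split /= -!mulr_sumr -/(Ex x n (fun _ => 1)) Ex_one mulr1.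
Qed.

Lemma visits_cons (v x : S) n (d : step m) (s : seq (step m)) :
  visits v x n.+1 (d :: s) = ((x == v) + visits v (move x d) n s)%N.
Proof. by []. Qed.

Definition An v n x := Ex x n (fun s => (visits v x n s)%:R).
Definition Bn v n x := Ex x n (fun s => (visits v x n s)%:R ^+ 2).

Lemma An_rec v n x : An v n.+1 x = (x == v)%:R + Pop (An v n) x.
Proof.
rewrite /An Ex_cons /Pop.
transitivity (\sum_d (stepw Pm Qm Rm x d * (x == v)%:R +
   stepw Pm Qm Rm x d * An v n (move x d))).
  apply: eq_bigr => d _; rewrite -mulrDr; congr (_ * _).
  rewrite (Ex_ext _ _ _ (fun s => 0 * (visits v (move x d) n s)%:R
       + 1 * (visits v (move x d) n s)%:R + (x == v)%:R)).
    by rewrite Ex_affine /An; ring.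
  by move=> s; rewrite visits_cons natrD; ring.
by rewrite big_split /= -mulr_suml stepw_sum mul1r.
Qed.

Lemma Bn_rec v n x : Bn v n.+1 x =
  (x == v)%:R + 2 * (x == v)%:R * Pop (An v n) x + Pop (Bn v n) x.
Proof.
rewrite /Bn Ex_cons /Pop.
transitivity (\sum_d (stepw Pm Qm Rm x d * (x == v)%:R +
   2 * (x == v)%:R * (stepw Pm Qm Rm x d * An v n (move x d)) +
   stepw Pm Qm Rm x d * Bn v n (move x d))).
  apply: eq_bigr => d _.
  have -> : stepw Pm Qm Rm x d * (x == v)%:R +
     2 * (x == v)%:R * (stepw Pm Qm Rm x d * An v n (move x d)) +
     stepw Pm Qm Rm x d * Bn v n (move x d) =
     stepw Pm Qm Rm x d * ((2 * (x == v)%:R) * An v n (move x d) +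
        1 * Bn v n (move x d) + (x == v)%:R) by ring.
  congr (_ * _).
  rewrite /An /Bn -Ex_affine /Ex; apply: eq_bigr => s _; congr (_ * _).
  rewrite visits_cons natrD.
  by case: (x == v) => /=; ring.
by rewrite !big_split /= -mulr_suml stepw_sum mul1r -mulr_sumr.
Qed.

Lemma An_Pt v n x : An v n x = \sum_(t < n) Pt t (fun y => (y == v)%:R) x.
Proof.
elim: n x => [|n IH] x.
  by rewrite /An Ex0 big_ord0.
rewrite An_rec big_ord_recl /=; congr (_ + _).
rewrite (Pop_ext _ (fun y => \sum_(t < n) Pt t (fun y => (y == v)%:R) y)) //.
by rewrite Pop_sum; apply: eq_bigr => t _; rewrite add0n.
Qed.

Lemma Pop_scale a f x : Pop (fun y => a * f y) x = a * Pop f x.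
Proof. by rewrite /Pop mulr_sumr; apply: eq_bigr => d _; ring. Qed.

Lemma An_ge0 v n x : 0 <= An v n x.
Proof. by rewrite An_Pt; apply: sumr_ge0 => t _; apply: Pt_ge0 => y. Qed.

Lemma Bn_bound v C : 0 <= C ->
  (forall k y, An v k y <= C * Num.sqrt k%:R) ->
  forall n y, Bn v n y <= (1 + 2 * C * Num.sqrt n%:R) * An v n y.
Proof.
move=> C0 hA n.
set D := 1 + 2 * C * Num.sqrt n%:R.
suff : forall k, (k <= n)%N -> forall y, Bn v k y <= D * An v k y by apply.
elim=> [|k IH] hk y.
  by rewrite /Bn /An !Ex0 /= expr0n /= mulr0.
rewrite Bn_rec An_rec.
set c := (y == v)%:R.
have c0 : 0 <= c by rewrite /c ler0n.
have c1 : c <= 1 by rewrite /c; case: (y == v).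
have hq : Pop (Bn v k) y <= D * Pop (An v k) y.
  rewrite -Pop_scale; apply: Pop_le => w; apply: IH; exact: ltnW.
have hp : Pop (An v k) y <= C * Num.sqrt n%:R.
  apply: (@le_trans _ _ (An v k.+1 y)).
    by rewrite An_rec lerDr.
  apply: (le_trans (hA _ _)); apply: ler_wpM2l => //.
  by rewrite ler_sqrt ?ler0n // ler_nat.
have hcp : c * Pop (An v k) y <= c * (C * Num.sqrt n%:R) by apply: ler_wpM2l.
rewrite /D; move: hq hcp; rewrite /D; nra.
Qed.

Lemma Pparts_ge0 phi x : (forall y, 0 <= phi y) ->
  [/\ 0 <= \sum_j Qm x.1 x.2 j * phi (x.1 - 1, j),
      0 <= \sum_j Rm x.1 x.2 j * phi (x.1, j) &
      0 <= \sum_j Pm x.1 x.2 j * phi (x.1 + 1, j)].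
Proof.
move=> h; split; apply: sumr_ge0 => j _; apply: mulr_ge0 => //;
  by case: (Hnn x.1 x.2 j) => [? [? ?]].
Qed.

Lemma Pop_geP phi x : (forall y, 0 <= phi y) ->
  \sum_j Pm x.1 x.2 j * phi (x.1 + 1, j) <= Pop phi x.
Proof.
move=> h; case: (Pparts_ge0 _ x h) => a b c.
rewrite Pop_split; lra.
Qed.

Lemma Pop_geQ phi x : (forall y, 0 <= phi y) ->
  \sum_j Qm x.1 x.2 j * phi (x.1 - 1, j) <= Pop phi x.
Proof.
move=> h; case: (Pparts_ge0 _ x h) => a b c.
rewrite Pop_split; lra.
Qed.

Lemma Pop_geR phi x : (forall y, 0 <= phi y) ->
  \sum_j Rm x.1 x.2 j * phi (x.1, j) <= Pop phi x.
Proof.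
move=> h; case: (Pparts_ge0 _ x h) => a b c.
rewrite Pop_split; lra.
Qed.

Lemma mxpow_step (A B : 'M[R]_m) t (F : 'I_m -> R) y :
  \sum_j (mxpow A t.+1 *m B) y j * F j =
  \sum_l A y l * \sum_j (mxpow A t *m B) l j * F j.
Proof.
rewrite mxpowS -mulmxA.
under eq_bigr do rewrite mxE mulr_suml.
rewrite exchange_big /=; apply: eq_bigr => l _.
by rewrite mulr_sumr; apply: eq_bigr => j _; rewrite mulrA.
Qed.

Lemma up_step phi t k y : (forall w, 0 <= phi w) ->
  \sum_j (mxpow (Rm k) t *m Pm k) y j * phi (k + 1, j) <= Pt t.+1 phi (k, y).
Proof.
move=> h; elim: t y => [|t IH] y.
  rewrite PtS.
  under eq_bigr do rewrite mul1mx.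
  exact: (Pop_geP _ (k, y) h).
rewrite mxpow_step PtS.
apply: le_trans (Pop_geR _ (k, y) (fun w => Pt_ge0 _ _ _ h)).
apply: ler_sum => l _; apply: ler_wpM2l; last exact: IH.
by case: (Hnn k y l) => [? [? ?]].
Qed.

Lemma down_step phi t k y : (forall w, 0 <= phi w) ->
  \sum_j (mxpow (Rm k) t *m Qm k) y j * phi (k - 1, j) <= Pt t.+1 phi (k, y).
Proof.
move=> h; elim: t y => [|t IH] y.
  rewrite PtS.
  under eq_bigr do rewrite mul1mx.
  exact: (Pop_geQ _ (k, y) h).
rewrite mxpow_step PtS.
apply: le_trans (Pop_geR _ (k, y) (fun w => Pt_ge0 _ _ _ h)).
apply: ler_sum => l _; apply: ler_wpM2l; last exact: IH.
by case: (Hnn k y l) => [? [? ?]].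
Qed.

Lemma window (F : nat -> R) T c N : (forall s, 0 <= F s) -> (c + T <= N)%N ->
  \sum_(t < T) F (t + c)%N <= \sum_(s < N) F s.
Proof.
move=> h hN.
rewrite -(big_mkord xpredT (fun t => F (t + c)%N)) -(big_mkord xpredT F).
have e : \sum_(c <= s < c + T) F s = \sum_(0 <= t < T) F (t + c)%N.
  by rewrite -{1}[c]add0n big_addn addKn.
rewrite (@big_cat_nat _ _ _ c 0 N) //=; last by apply: leq_trans hN; exact: leq_addr.
rewrite (@big_cat_nat _ _ _ (c + T) c N) //=; last exact: leq_addr.
rewrite e.
have h1 : 0 <= \sum_(0 <= i < c) F i by apply: sumr_ge0.
have h2 : 0 <= \sum_(c + T <= i < N) F i by apply: sumr_ge0.
lra.
Qed.

Definition ind (w : S) := fun y : S => (y == w)%:R : R.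

Lemma ind_ge0 w y : 0 <= ind w y.
Proof. exact: ler0n. Qed.

Lemma hit_up T k y j :
  \sum_(t < T) (mxpow (Rm k) t *m Pm k) y j <=
  \sum_(s < (2 * T).+2) Pt s (ind (k + 1, j)) (k, y).
Proof.
apply: (@le_trans _ _ (\sum_(t < T) Pt (t + 1)%N (ind (k + 1, j)) (k, y))); last first.
  apply: (window (fun s => Pt s (ind (k + 1, j)) (k, y))).
    by move=> s; apply: Pt_ge0; exact: ind_ge0.
  lia.
apply: ler_sum => t _; rewrite addn1.
apply: le_trans (up_step _ t k y (ind_ge0 (k + 1, j))).
have hF : forall j', 0 <= (mxpow (Rm k) t *m Pm k) y j' * ind (k + 1, j) (k + 1, j').
  move=> j'; apply: mulr_ge0; last exact: ind_ge0.
  have nR : nonneg (Rm k) by move=> i i'; case: (Hnn k i i') => [? [? ?]].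
  have nP : nonneg (Pm k) by move=> i i'; case: (Hnn k i i') => [? [? ?]].
  exact: (nonneg_mul (nonneg_pow t nR) nP).
apply: le_trans (sum_ge_term _ _ j hF).
by rewrite /ind eqxx mulr1.
Qed.

Lemma nonneg_RP k t : nonneg (mxpow (Rm k) t *m Pm k).
Proof.
have nR : nonneg (Rm k) by move=> i i'; case: (Hnn k i i') => [? [? ?]].
have nP : nonneg (Pm k) by move=> i i'; case: (Hnn k i i') => [? [? ?]].
exact: (nonneg_mul (nonneg_pow t nR) nP).
Qed.

Lemma nonneg_RQ k t : nonneg (mxpow (Rm k) t *m Qm k).
Proof.
have nR : nonneg (Rm k) by move=> i i'; case: (Hnn k i i') => [? [? ?]].
have nP : nonneg (Qm k) by move=> i i'; case: (Hnn k i i') => [? [? ?]].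
exact: (nonneg_mul (nonneg_pow t nR) nP).
Qed.

Lemma hit_flat T k y l j0 :
  (\sum_(t < T) (mxpow (Rm k) t *m Pm k) y j0) *
  (\sum_(u < T) (mxpow (Rm (k + 1)) u *m Qm (k + 1)) j0 l)
   <= T.+1%:R * \sum_(s < (2 * T).+2) Pt s (ind (k, l)) (k, y).
Proof.
have Sg0 : 0 <= \sum_(s < (2 * T).+2) Pt s (ind (k, l)) (k, y).
  by apply: sumr_ge0 => s _; apply: Pt_ge0; exact: ind_ge0.
rewrite mulr_suml.
apply: (@le_trans _ _ (\sum_(t < T) \sum_(s < (2 * T).+2) Pt s (ind (k, l)) (k, y))); last first.
  rewrite sumr_const card_ord -(mulr_natl _ T); apply: ler_wpM2r => //.
  by rewrite ler_nat.
apply: ler_sum => t _.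
rewrite mulr_sumr.
apply: (@le_trans _ _ (\sum_(u < T) Pt (u + t.+2)%N (ind (k, l)) (k, y))); last first.
  apply: (window (fun s => Pt s (ind (k, l)) (k, y))).
    by move=> s; apply: Pt_ge0; exact: ind_ge0.
  have := ltn_ord t; lia.
apply: ler_sum => u _.
have -> : (u + t.+2 = t.+1 + u.+1)%N by lia.
rewrite PtD.
apply: le_trans (up_step _ t k y (fun w => Pt_ge0 u.+1 (ind (k, l)) w (ind_ge0 (k, l)))).
have hF : forall j, 0 <= (mxpow (Rm k) t *m Pm k) y j * Pt u.+1 (ind (k, l)) (k + 1, j).
  move=> j; apply: mulr_ge0; first exact: nonneg_RP.
  by apply: Pt_ge0; exact: ind_ge0.
apply: le_trans (sum_ge_term _ _ j0 hF).
apply: ler_wpM2l; first exact: nonneg_RP.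
apply: le_trans (down_step _ u (k + 1) j0 (ind_ge0 (k, l))).
have hG : forall l', 0 <= (mxpow (Rm (k + 1)) u *m Qm (k + 1)) j0 l' * ind (k, l) (k + 1 - 1, l').
  move=> l'; apply: mulr_ge0; first exact: nonneg_RQ.
  exact: ind_ge0.
apply: le_trans (sum_ge_term _ _ l hG).
by rewrite /ind addrK eqxx mulr1.
Qed.

Hypothesis m0 : (0 < m)%N.
Variables (e0 : R) (k0 : nat).
Hypothesis He0 : 0 < e0.
Hypothesis Hell : forall n, mxnorm (mxpow (Rm n) k0) <= 1 - e0 /\
       (forall i j, e0 <= (invmx (1%:M - Rm n) *m Pm n) i j) /\
       (forall i j, e0 <= (invmx (1%:M - Rm n) *m Qm n) i j).
Variable zetam : int -> 'M[R]_m.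
Hypothesis Hzs : forall n, stochastic (zetam n).
Variable rho : int -> 'rV[R]_m.
Variable Brho : R.
Hypothesis Hrpos : forall n i, 0 < rho n 0 i.
Hypothesis HB : forall n i, rho n 0 i <= Brho.
Hypothesis Hrid : forall n,
  (rho n *m Pm n *m (mf (n + 1) - zetam (n + 1) *m mf n)) 0 0 = (2 * m%:R)^-1.

Lemma sum_constR n (c : R) : \sum_(i < n) c = n%:R * c.
Proof. by rewrite sumr_const card_ord mulr_natl. Qed.

Lemma P_le1 n i j : Pm n i j <= 1.
Proof.
have h : forall j', 0 <= Pm n i j' + Qm n i j' + Rm n i j'.
  by move=> j'; case: (Hnn n i j') => [? [? ?]]; lra.
apply: (@le_trans _ _ (Pm n i j + Qm n i j + Rm n i j)).
  by case: (Hnn n i j) => [? [? ?]]; lra.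
by rewrite -(Hsum n i); exact: (sum_ge_term _ (fun j' => Pm n i j' + Qm n i j' + Rm n i j') j h).
Qed.

Definition i0 : 'I_m := Ordinal m0.

Lemma Brho_gt0 : 0 < Brho.
Proof. exact: lt_le_trans (Hrpos 0 i0) (HB 0 i0). Qed.

Definition c0 : R := (2 * m%:R)^-1 / (2 * (m%:R * (m%:R * Brho))).

Lemma c0_gt0 : 0 < c0.
Proof.
have mp : 0 < m%:R :> R by rewrite ltr0n.
rewrite /c0; apply: divr_gt0; first by rewrite invr_gt0; apply: mulr_gt0.
by apply: mulr_gt0 => //; apply: mulr_gt0 => //; apply: mulr_gt0 => //; exact: Brho_gt0.
Qed.

Lemma exists_gap k : exists j l, c0 / 2 <= mf (k + 1) j 0 - mf k l 0.
Proof.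
set u := fun j => (rho k *m Pm k) 0 j.
set dd := fun j => (mf (k + 1) - zetam (k + 1) *m mf k) j 0.
have hid : \sum_j u j * dd j = (2 * m%:R)^-1.
  by rewrite -(Hrid k) [RHS]mxE.
have u0 : forall j, 0 <= u j.
  move=> j; rewrite /u mxE; apply: sumr_ge0 => i _; apply: mulr_ge0.
    exact: ltW.
  by case: (Hnn k i j) => [? [? ?]].
have uB : forall j, u j <= m%:R * Brho.
  move=> j; rewrite /u mxE.
  apply: (@le_trans _ _ (\sum_(i < m) Brho)); last by rewrite sumr_const card_ord mulr_natl.
  apply: ler_sum => i _; rewrite -[Brho]mulr1; apply: ler_pM => //.
  - exact: ltW.
  - by case: (Hnn k i j) => [? [? ?]].
  - exact: P_le1.
have c00 := c0_gt0.
have mp : 0 < m%:R :> R by rewrite ltr0n.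
have [/existsP [j hj] | /existsPn hn] := boolP [exists j : 'I_m, c0 <= dd j]; last first.
  exfalso.
  have : \sum_j u j * dd j <= \sum_(j < m) (m%:R * Brho) * c0.
    apply: ler_sum => j _; apply: (@le_trans _ _ (u j * c0)).
      apply: ler_wpM2l => //; apply: ltW; by rewrite ltNge hn.
    by apply: ler_wpM2r; [exact: ltW | exact: uB].
  rewrite hid sum_constR.
  have -> : m%:R * (m%:R * Brho * c0) = (2 * m%:R)^-1 / 2.
    rewrite /c0; field.
    by rewrite (gt_eqF mp) (gt_eqF Brho_gt0).
  have : 0 < (2 * m%:R)^-1 :> R by rewrite invr_gt0 mulr_gt0.
  lra.
exists j.
have [/existsP [l hl] | /existsPn hn] :=
  boolP [exists l : 'I_m, c0 / 2 <= mf (k + 1) j 0 - mf k l 0]; first by exists l.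
exfalso.
case: (Hzs (k + 1)) => z0 z1.
have hd : dd j = \sum_l zetam (k + 1) j l * (mf (k + 1) j 0 - mf k l 0).
  rewrite /dd !mxE.
  under [RHS]eq_bigr do rewrite mulrBr.
  by rewrite sumrB -mulr_suml z1 mul1r.
have : dd j <= \sum_l zetam (k + 1) j l * (c0 / 2).
  rewrite hd; apply: ler_sum => l _; apply: ler_wpM2l => //.
  by apply: ltW; rewrite ltNge hn.
rewrite -mulr_suml z1 mul1r; lra.
Qed.

Lemma rbk n : rowbound (mxpow (Rm n) k0) (1 - e0).
Proof. exact: mxnorm_row (Hell n).1. Qed.

Lemma unitR n : (1%:M - Rm n) \in unitmx.
Proof. exact: (@unit_IA _ _ (Rm n) k0 e0 He0 (rbk n)). Qed.

Section WithT.
Variable T : nat.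
Hypothesis hT : forall n, rowbound (mxpow (Rm n) T) (e0 / 2).

Lemma upL n y j : e0 / 2 <= \sum_(t < T) (mxpow (Rm n) t *m Pm n) y j.
Proof.
have nR : nonneg (Rm n) by move=> i i'; case: (Hnn n i i') => [? [? ?]].
have nP : nonneg (Pm n) by move=> i i'; case: (Hnn n i i') => [? [? ?]].
have nQ : nonneg (Qm n) by move=> i i'; case: (Hnn n i i') => [? [? ?]].
have hS : forall i, \sum_j (Pm n i j + Qm n i j + Rm n i j) = 1 by exact: Hsum.
case: (Hell n) => _ [hX hY].
exact: (@series_lb _ _ (Rm n) (Pm n) (Qm n) e0 T He0 (unitR n) nR nP nQ hS hX hY (hT n)).
Qed.

Lemma downL n y j : e0 / 2 <= \sum_(t < T) (mxpow (Rm n) t *m Qm n) y j.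
Proof.
have nR : nonneg (Rm n) by move=> i i'; case: (Hnn n i i') => [? [? ?]].
have nP : nonneg (Pm n) by move=> i i'; case: (Hnn n i i') => [? [? ?]].
have nQ : nonneg (Qm n) by move=> i i'; case: (Hnn n i i') => [? [? ?]].
have hS : forall i, \sum_j (Qm n i j + Pm n i j + Rm n i j) = 1.
  by move=> i; rewrite -(Hsum n i); apply: eq_bigr => l _; ring.
case: (Hell n) => _ [hX hY].
exact: (@series_lb _ _ (Rm n) (Qm n) (Pm n) e0 T He0 (unitR n) nR nQ nP hS hY hX (hT n)).
Qed.

Definition eta : R := Num.min (e0 / 2) ((e0 / 2) ^+ 2 / T.+1%:R).

Lemma W_lb k y : c0 / 2 * eta <=
  \sum_(s < (2 * T).+2) Pt s (fun w => `|fm w - fm (k, y)|) (k, y).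
Proof.
have [j [l hjl]] := exists_gap k.
set v : S := (k, y).
set w1 : S := (k + 1, j).
set w2 : S := (k, l).
set g := fun w => `|fm w - fm v|.
set a1 := g w1. set a2 := g w2.
have a10 : 0 <= a1 by exact: normr_ge0.
have a20 : 0 <= a2 by exact: normr_ge0.
have w12 : w1 != w2.
  apply/negP => /eqP [] /eqP; rewrite -subr_eq0 addrAC subrr add0r.
  by rewrite oner_eq0.
have pw : forall y', a1 * ind w1 y' + a2 * ind w2 y' <= g y'.
  move=> y'; rewrite /ind.
  case: (eqVneq y' w1) => [->|n1].
    by rewrite (negPf w12) mulr0 addr0 mulr1.
  case: (eqVneq y' w2) => [->|n2].
    by rewrite mulr0 add0r mulr1.
  by rewrite !mulr0 addr0; exact: normr_ge0.
set A1 := \sum_(s < (2 * T).+2) Pt s (ind w1) v.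
set A2 := \sum_(s < (2 * T).+2) Pt s (ind w2) v.
have hsum : a1 * A1 + a2 * A2 <= \sum_(s < (2 * T).+2) Pt s g v.
  rewrite /A1 /A2 !mulr_sumr -big_split /=; apply: ler_sum => s _.
  rewrite -Pt_lin; exact: Pt_le.
have hA1 : e0 / 2 <= A1 by apply: le_trans (upL k y j) (hit_up T k y j).
have hA2 : (e0 / 2) ^+ 2 / T.+1%:R <= A2.
  have Tp : 0 < T.+1%:R :> R by rewrite ltr0n.
  rewrite ler_pdivrMr // [A2 * _]mulrC.
  apply: le_trans (hit_flat T k y l j).
  rewrite expr2; apply: ler_pM.
  - by apply: ltW; apply: divr_gt0.
  - by apply: ltW; apply: divr_gt0.
  - exact: upL.
  - exact: downL.
have he1 : eta <= A1 by apply: le_trans hA1; rewrite /eta ge_min lexx.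
have he2 : eta <= A2 by apply: le_trans hA2; rewrite /eta ge_min lexx orbT.
have eta0 : 0 <= eta.
  rewrite /eta le_min; apply/andP; split.
    by apply: ltW; apply: divr_gt0.
  by apply: divr_ge0; [apply: exprn_ge0; apply: ltW; apply: divr_gt0|apply: ler0n].
have hc : c0 / 2 <= a1 + a2.
  apply: (le_trans hjl); apply: (@le_trans _ _ `|fm w1 - fm w2|).
    exact: ler_norm.
  by rewrite /a1 /a2 /g [`|fm w2 - fm v|]distrC; exact: ler_distD.
apply: le_trans hsum.
have p1 : 0 <= a1 * (A1 - eta) by apply: mulr_ge0; rewrite // subr_ge0.
have p2 : 0 <= a2 * (A2 - eta) by apply: mulr_ge0; rewrite // subr_ge0.
have p3 : 0 <= eta * (a1 + a2 - c0 / 2) by apply: mulr_ge0; rewrite // subr_ge0.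
nra.
Qed.

End WithT.

Definition phiT (N : nat) (M V : R) : R :=
  let X := V / Num.sqrt N%:R in if M < X then X else 0.

Lemma Ex_le x n F G : (forall s, F s <= G s) -> Ex x n F <= Ex x n G.
Proof.
move=> h; apply: ler_sum => s _; apply: ler_wpM2l; [exact: pathw_ge0|exact: h].
Qed.

Lemma main_ui eps : 0 < eps ->
  exists M : R, forall N (z v : S), ui_tail Pm Qm Rm z v N M <= eps.
Proof.
move=> eps0.
have r0 : 0 <= 1 - e0 by apply: le_trans (rbk 0 i0); apply: sumr_ge0.
have r1 : 1 - e0 < 1 by move: He0; lra.
have e20 : 0 < e0 / 2 by apply: divr_gt0.
have [q hq] := @pow_small _ (1 - e0) (e0 / 2) r0 r1 e20.
set T := (k0 * q)%N.
have hT : forall n, rowbound (mxpow (Rm n) T) (e0 / 2).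
  move=> n i; apply: le_trans hq.
  exact: (@rowbound_pow _ _ (Rm n) k0 (1 - e0) q (rbk n) r0 i).
set H := (2 * T).+2.
set dl := c0 / 2 * eta T.
have eta0 : 0 < eta T.
  rewrite /eta lt_min; apply/andP; split => //.
  by apply: divr_gt0; [apply: exprn_gt0|rewrite ltr0n].
have dl0 : 0 < dl by apply: mulr_gt0 => //; apply: divr_gt0 => //; exact: c0_gt0.
have hK := K'_ge0 m0.
set C := H%:R * H%:R * (K' + 1) / dl.
have C0 : 0 <= C.
  by apply: divr_ge0; [apply: mulr_ge0; [apply: mulr_ge0; apply: ler0n|lra]|exact: ltW].
have hA : forall (v : S) n z, An v n z <= C * Num.sqrt n%:R.
  move=> [k y] n z; rewrite An_Pt.
  have := tanaka m0 (k, y) H dl dl0 (W_lb T hT k y) n z.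
  case: n => [|n] h.
    by rewrite big_ord0 sqrtr0 mulr0.
  apply: (le_trans h).
  have s1 : 1 <= Num.sqrt (n.+1%:R : R).
    have : Num.sqrt 1 <= Num.sqrt (n.+1%:R : R) by rewrite ler_sqrt ?ler0n // ler1n.
    by rewrite sqrtr1.
  rewrite /C mulrAC [X in _ <= X]mulrAC -!mulrA.
  apply: ler_wpM2l; first by apply: ler0n.
  apply: ler_wpM2l; first by apply: ler0n.
  rewrite [X in _ <= X]mulrC -mulrA [X in _ <= _ * X]mulrC mulrA.
  rewrite [X in _ <= X]mulrC.
  apply: ler_wpM2l; first by apply: ltW; rewrite invr_gt0.
  nra.
set D := C + 2 * C ^+ 2.
have D0 : 0 <= D by rewrite /D; apply: addr_ge0 => //; apply: mulr_ge0 => //; apply: exprn_ge0.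
exists (D / eps + 1).
set M := D / eps + 1.
have M0 : 0 < M by rewrite /M; apply: ltr_pwDr => //; apply: divr_ge0 => //; apply: ltW.
move=> N z v.
have -> : ui_tail Pm Qm Rm z v N M =
   Ex z N (fun s => phiT N M (visits v z N s)%:R) by [].
case: N => [|N].
  rewrite Ex0 /phiT /= mul0r; case: ifP => _; lra.
have sN : 0 < Num.sqrt (N.+1%:R : R) by rewrite sqrtr_gt0 ltr0n.
have Np : 0 < N.+1%:R :> R by rewrite ltr0n.
have hF : forall s, phiT N.+1 M (visits v z N.+1 s)%:R <= (visits v z N.+1 s)%:R ^+ 2 / (N.+1%:R * M).
  move=> s; rewrite /phiT /=.
  set V := (visits v z N.+1 s)%:R.
  have V0 : 0 <= V by apply: ler0n.
  have e : V ^+ 2 / (N.+1%:R * M) = (V / Num.sqrt N.+1%:R) ^+ 2 / M.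
    rewrite expr_div_n sqr_sqrtr ?ler0n // invfM mulrA //.
  case: ifP => hM; last by apply: divr_ge0; [apply: exprn_ge0|apply: mulr_ge0; apply: ltW].
  rewrite e ler_pdivlMr // expr2.
  apply: ler_wpM2l; [apply: divr_ge0 => //; exact: ltW | exact: ltW].
apply: (le_trans (Ex_le _ _ _ _ hF)).
have -> : Ex z N.+1 (fun s => (visits v z N.+1 s)%:R ^+ 2 / (N.+1%:R * M)) =
   Bn v N.+1 z / (N.+1%:R * M).
  by rewrite /Bn /Ex mulr_suml; apply: eq_bigr => s _; rewrite mulrA.
have hB := Bn_bound v C C0 (hA v) N.+1 z.
have hA' := hA v N.+1 z.
have hAge := An_ge0 v N.+1 z.
have hsq : Num.sqrt (N.+1%:R : R) ^+ 2 = N.+1%:R by rewrite sqr_sqrtr ?ler0n.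
have s1 : 1 <= Num.sqrt (N.+1%:R : R).
  have : Num.sqrt 1 <= Num.sqrt (N.+1%:R : R) by rewrite ler_sqrt ?ler0n // ler1n.
  by rewrite sqrtr1.
have hBD : Bn v N.+1 z <= D * N.+1%:R.
  apply: (le_trans hB).
  set sq := Num.sqrt (N.+1%:R : R) in hsq s1 hA' *.
  rewrite -hsq /D.
  have : (1 + 2 * C * sq) * An v N.+1 z <= (1 + 2 * C * sq) * (C * sq).
    apply: ler_wpM2l => //; nra.
  nra.
rewrite ler_pdivrMr ?mulr_gt0 //.
apply: (le_trans hBD).
have : D <= eps * M by rewrite /M mulrDr mulrC divfK ?gt_eqF // mulr1 lerDl; apply: ltW.
move=> h; rewrite mulrA [eps * _]mulrC -mulrA mulrC.
by apply: ler_wpM2l => //; apply: ltW.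
Qed.

End Walk.

Theorem lemma6p3 (R : realType) (m : nat) (Pm Qm Rm : int -> 'M[R]_m)
    (zeta zetam : int -> 'M[R]_m) (mf : int -> 'cV[R]_m)
    (rho : int -> 'rV[R]_m) (a : R) :
  (0 < m)%N ->
  standing_assumptions Pm Qm Rm zeta zetam mf rho a ->
  forall K : R, 0 < K ->
  forall eps : R, 0 < eps ->
  exists M : R, forall (N : nat) (z : int * 'I_m) (k : int) (y : 'I_m),
    `|(k%:~R : R)| <= K * Num.sqrt (N%:R) ->
    ui_tail Pm Qm Rm z (k, y) N M <= eps.
Proof.
move=> m0 SA K K0 eps eps0.
case: SA => Hnn [Hsum [[e0 [k0 [He0 Hell]]] [_ [_ [Hmf [[K' HK] [_ [Hzs [_ [_
  [Hrpos [[B HB] [_ [_ [Hrid _]]]]]]]]]]]]]]].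
have [M hM] := main_ui _ _ _ _ _ Hnn Hsum _ Hmf _ HK m0 _ _ He0 Hell _ Hzs _ _ Hrpos HB Hrid _ eps0.
by exists M => N z k y _; exact: hM.
Qed.
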